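(* Let $e$ be an edge (resp. half-edge) of a rationally metrised graph $\Gamma$, let $v_{e,s}$ be the rational vertex at distance $s\in[0,\ell(e)]\cap\mathbb Q$ (resp. $s\in[0,\infty)\cap\mathbb Q$) along $e$ from $s(e)$, and let $e_s$ be the rational edge from $s(e)$ to $v_{e,s}$ inside $e$. Then for every rational vertex $b$, \[\gamma^{\mathrm{can}}_{b,v_{e,s}}=e_s\,\gamma^{\mathrm{can}}_{b,s(e)}\,\alpha_b^{-1}\left(\exp(-se^* )\right),\] where $\alpha_b\colon\widehat{\mathbb Q}\pi_1(\Gamma,b)\xrightarrow{\sim}\prod_{m\ge0}\mathrm H^1(\Gamma)^{\otimes m}$ is the duality isomorphism at basepoint $b$.
   Context: Graph conventions: finite sets of vertices, oriented edges, half-edges, source map $s$, fixed-point-free involution $e\mapsto e^{-1}$ on edges, $t(e)=s(e^{-1})$, connected; lengths $\ell(e)=\ell(e^{-1})\in\mathbb Q_{>0}$. Rational vertices are points at rational distance along edges/half-edges; one may subdivide so they become vertices, which does not affect the constructions. Paths compose right to left. $\mathrm H_1(\Gamma)\subset\mathbb Q\cdot E^\pm$ (span of edges mod $e^{-1}=-e$) with pairing $\int_ee'=\pm\ell(e)$ if $e'=e^{\pm1}$, else $0$; $\mathrm H^1(\Gamma)$ is the dual. For an edge $e$, $e^*\in\mathrm H^1(\Gamma)$ gives the multiplicity of $e$ in a homology class; for a half-edge, $e^*=0$. Higher cycle pairing: $\int_1\omega_1\cdots\omega_n=[n=0]$, $\int_e\omega_1\cdots\omega_n=\frac1{n!}\prod_i\int_e\omega_i$,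 $\int_{e\gamma}\omega_1\cdots\omega_n=\sum_{i=0}^n\int_e\omega_{i+1}\cdots\omega_n\int_\gamma\omega_1\cdots\omega_i$. $\widehat{\mathbb Q}\pi_1(\Gamma;u,v)$ is the completion of $\mathbb Q\pi_1(\Gamma;u,v)$ with respect to powers of the augmentation ideal of $\mathbb Q\pi_1(\Gamma,u)$; $\alpha\colon\widehat{\mathbb Q}\pi_1(\Gamma;u,v)\xrightarrow\sim\prod_m\mathrm H^1(\Gamma)^{\otimes m}$ sends $\gamma$ to $\omega_1\cdots\omega_n\mapsto\int_\gamma\omega_1\cdots\omega_n$. The canonical path $\gamma^{\mathrm{can}}_{u,v}:=\alpha^{-1}(1)\in\widehat{\mathbb Q}\pi_1(\Gamma;u,v)$. *)

(* Defs.v *)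
From HB Require Import structures.
From mathcomp Require Import all_boot all_order all_algebra.
Set Implicit Arguments. Unset Strict Implicit. Unset Printing Implicit Defensive.
Import Order.TTheory GRing.Theory Num.Theory.
Local Open Scope ring_scope.

(* Walks: [p] is the sequence of edges in traversal order (first edge first),
   starting at [u] and ending at [v]; the target of [e] is [src (inv e)]. *)
Fixpoint gpath (V E : eqType) (src : E -> V) (inv : E -> E) (u v : V)
    (p : seq E) : bool :=
  match p with
  | [::] => u == v
  | g :: p' => (src g == u) && gpath src inv (src (inv g)) v p'
  end.

Record graph := Graph {
  gV : finType; gE : finType; gH : finType;
  gsrc : gE -> gV; ginv : gE -> gE; ghsrc : gH -> gV; glen : gE -> rat;
  ginvK : involutive ginv;
  ginv_neq : forall e, ginv e != e;
  glen_pos : forall e, 0 < glen e;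
  glen_inv : forall e, glen (ginv e) = glen e;
  gconn : forall u v : gV, exists p : seq gE, gpath gsrc ginv u v p }.

Section Defs.
Variable G : graph.
Local Notation V := (gV G).
Local Notation E := (gE G).
Local Notation H := (gH G).

Definition tgt (e : E) : V := gsrc (ginv e).
Definition is_path (u v : V) (p : seq E) : bool := gpath (@gsrc G) (@ginv G) u v p.
Definition path_end (u : V) (p : seq E) : V := last u (map tgt p).

(* Reduced form of a walk (cancel backtracking e^{-1} e); homotopy classes of
   paths = reduced walks, which form the basis of Q pi_1(G; u, v). *)
Definition red_step (st : seq E) (e : E) : seq E :=
  match st with
  | f :: st' => if f == ginv e then st' else e :: st
  | [::] => [:: e]
  end.
Definition reduce (p : seq E) : seq E := rev (foldl red_step [::] p).

(* Finite formal Q-linear combinations of walks (elements of the group ring,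
   via their reductions). *)
Definition fsum := seq (rat * seq E).
Definition coef (x : fsum) (q : seq E) : rat :=
  \sum_(t <- x | reduce t.2 == q) t.1.
Definition fs_eq (x y : fsum) : Prop := forall q, coef x q = coef y q.
Definition fs_sub (x y : fsum) : fsum := x ++ [seq (- t.1, t.2) | t <- y].
(* product x * y : composition right to left, y traversed first *)
Definition fs_mul (x y : fsum) : fsum :=
  [seq (t.1 * t'.1, t'.2 ++ t.2) | t <- x, t' <- y].
Definition fs_one : fsum := [:: (1, [::])].
Definition aug_prod (gs : seq (seq E)) : fsum :=
  foldr (fun g acc => fs_mul [:: (1, g); (-1, [::])] acc) fs_one gs.

(* x lies in Q pi_1(G;u,v) . I_u^n, I_u the augmentation ideal of Q pi_1(G,u). *)
Definition in_J (u v : V) (n : nat) (x : fsum) : Prop :=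
  exists ts : seq ((rat * seq E) * seq (seq E)),
    all (fun t => [&& is_path u v t.1.2, size t.2 == n & all (is_path u u) t.2]) ts
    /\ fs_eq x (flatten [seq fs_mul [:: t.1] (aug_prod t.2) | t <- ts]).

(* Elements of the completion hat{Q} pi_1(G;u,v) = lim_n Q pi_1(G;u,v)/(. I_u^n):
   compatible families of representatives x_n of classes mod Q pi_1 . I_u^n. *)
Definition in_completion (u v : V) (X : nat -> fsum) : Prop :=
  (forall n, all (fun t => is_path u v t.2) (X n)) /\
  (forall n, in_J u v n (fs_sub (X n.+1) (X n))).

(* H_1(G): antisymmetric edge chains with zero boundary.  An element of
   H^1(G) = H_1(G)^dual is represented by the cycle c with
   omega = < . , c > (metric pairing); then int_e omega = l(e) c(e). *)
Definition is_cycle (c : E -> rat) : bool :=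
  [forall e, c (ginv e) == - c e] && [forall w : V, \sum_(e | gsrc e == w) c e == 0].

Definition iint_edge (e : E) (ws : seq (E -> rat)) : rat :=
  ((size ws)`!%:R)^-1 * \prod_(w <- ws) (glen e * w e).

(* higher cycle pairing, on the reversed walk (last edge first):
   int_{e gamma} w_1..w_n = sum_i int_e w_{i+1}..w_n int_gamma w_1..w_i *)
Fixpoint iint_rev (r : seq E) (ws : seq (E -> rat)) : rat :=
  match r with
  | [::] => (size ws == 0%N)%:R
  | e :: r' => \sum_(i < (size ws).+1) iint_edge e (drop i ws) * iint_rev r' (take i ws)
  end.
Definition iint (p : seq E) (ws : seq (E -> rat)) : rat := iint_rev (rev p) ws.
Definition iint_fs (x : fsum) (ws : seq (E -> rat)) : rat :=
  \sum_(t <- x) t.1 * iint t.2 ws.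

(* Elements of prod_m H^1^{(x) m}, given through their pairings with
   omega_1 (x) ... (x) omega_m. *)
Definition series := seq (E -> rat) -> rat.
Definition ser_eq (f g : series) : Prop :=
  forall ws, all is_cycle ws -> f ws = g ws.
Definition ser_one : series := fun ws => (size ws == 0%N)%:R.
(* exp(t . eta) where [pe w] = <eta, omega_w> *)
Definition ser_exp (t : rat) (pe : (E -> rat) -> rat) : series :=
  fun ws => t ^+ size ws / (size ws)`!%:R * \prod_(w <- ws) pe w.

(* the duality map alpha: degree m component read off at level m+1 *)
Definition alpha (X : nat -> fsum) : series :=
  fun ws => iint_fs (X (size ws).+1) ws.

Definition canonical_path (u v : V) (Y : nat -> fsum) : Prop :=
  in_completion u v Y /\ ser_eq (alpha Y) ser_one.

(* Rational vertices made into vertices by subdivision.  An original edge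
   (kind = None) of the unsubdivided graph is the chain es = [e_1;...;e_k]
   (k >= 1) from u, all intermediate vertices being subdivision vertices
   (exactly the two edges inv e_i, e_(i+1) leaving it, no half-edge).
   An original half-edge (kind = Some h) is the chain es (k >= 0) followed by
   the half-edge h, the vertex where h starts being a subdivision vertex if
   k >= 1. *)
Definition subdivided_edge (u : V) (es : seq E) (kind : option H) : Prop :=
  [/\ is_path u (path_end u es) es,
      uniq (es ++ map (@ginv G) es),
      (forall (d : E) i, (i.+1 < size es)%N ->
         [set f | gsrc f == tgt (nth d es i)] = [set ginv (nth d es i); nth d es i.+1]
         /\ [set h : H | ghsrc h == tgt (nth d es i)] = set0)
    & match kind with
      | None => (0 < size es)%N
      | Some h => ghsrc h = path_end u es /\
          (forall d : E, (0 < size es)%N ->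
             [set f | gsrc f == path_end u es] = [set ginv (last d es)]
             /\ [set h' : H | ghsrc h' == path_end u es] = [set h])
      end].

(* <e^*, omega_w> = multiplicity of e in the cycle w  (= w(e_1));
   e^* = 0 for a half-edge. *)
Definition estar_pair (es : seq E) (kind : option H) (w : E -> rat) : rat :=
  match kind with
  | Some _ => 0
  | None => if es is e1 :: _ then w e1 else 0
  end.

End Defs.

(* Main.v *)
Require Import Defs.
From HB Require Import structures.
From mathcomp Require Import all_boot all_order all_algebra.
From mathcomp Require Import ring.
Import Order.TTheory GRing.Theory Num.Theory.
Local Open Scope ring_scope.
Unset Printing Implicit Defensive.

Definition FF {G : graph} (st p : seq (gE G)) := foldl (@red_step G) st p.

Fixpoint sred {G : graph} (st : seq (gE G)) : bool :=
  match st with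
  | a :: ((b :: _) as st') => (a != ginv b) && sred st'
  | _ => true
  end.

Lemma ginvK' {G : graph} (e : gE G) : ginv (ginv e) = e.
Proof. exact: ginvK. Qed.

Lemma sred_step {G : graph} (st : seq (gE G)) e : sred st -> sred (red_step st e).
Proof.
case: st => [|f st] //= H.
case: ifP => Hf /=.
  by case: st H => [|g st] //= /andP[].
rewrite H andbT; apply/negP => /eqP He.
by move: Hf; rewrite He ginvK' eqxx.
Qed.

Lemma sred_FF {G : graph} (st p : seq (gE G)) : sred st -> sred (FF st p).
Proof.
elim: p st => [|e p IH] st H //=.
by apply: IH; apply: sred_step.
Qed.

Lemma FF_cat {G : graph} (st p q : seq (gE G)) : FF st (p ++ q) = FF (FF st p) q.
Proof. by rewrite /FF foldl_cat. Qed.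

Lemma FF_cancel {G : graph} (st x y : seq (gE G)) e :
  sred st -> FF st (x ++ e :: ginv e :: y) = FF st (x ++ y).
Proof.
move=> Hst; rewrite !FF_cat.
have : sred (FF st x) by apply: sred_FF.
move: (FF st x) => s Hs.
rewrite /FF /=; congr foldl.
case: s Hs => [|f s] /=.
  by rewrite ginvK' eqxx.
case: ifP => Hf.
  case: s => [|g s] /=.
    by move/eqP: Hf => ->.
  case/andP => Hfg _.
  case: ifP => Hg.
    move/eqP: Hg; rewrite ginvK' => Hg.
    by move: Hfg; rewrite Hg (eqP Hf) eqxx.
  by rewrite (eqP Hf).
by rewrite /= ginvK' eqxx.
Qed.

Lemma FF_M {G : graph} (st0 st q : seq (gE G)) :
  sred st0 -> FF st0 (rev st ++ q) = FF st0 (rev (FF st q)).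
Proof.
move=> H0; elim: q st => [|e q IH] st; first by rewrite cats0.
rewrite /= -/(FF _ _) -IH.
case: st => [|f st] /=; first by [].
case: ifP => Hf.
  rewrite rev_cons cat_rcons (eqP Hf).
  have -> : e :: q = ginv (ginv e) :: q by rewrite ginvK'.
  by rewrite FF_cancel.
by rewrite [rev (e :: _)]rev_cons cat_rcons.
Qed.

Lemma red_catl {G : graph} (a b : seq (gE G)) : reduce (reduce a ++ b) = reduce (a ++ b).
Proof.
rewrite /reduce -!/(FF _ _) !FF_cat.
by have := FF_M [::] [::] a (erefl true) => /= <-.
Qed.

Lemma red_catr {G : graph} (a b : seq (gE G)) : reduce (a ++ reduce b) = reduce (a ++ b).
Proof.
rewrite /reduce -!/(FF _ _) !FF_cat.
by rewrite -(FF_M (FF [::] a) [::] b (sred_FF [::] a (erefl true))) /=.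
Qed.

Lemma red_mid {G : graph} (a b c : seq (gE G)) :
  reduce (a ++ reduce b ++ c) = reduce (a ++ b ++ c).
Proof. by rewrite -red_catr red_catl red_catr. Qed.

Lemma red_idem {G : graph} (a : seq (gE G)) : reduce (reduce a) = reduce a.
Proof. by have := red_catl a [::]; rewrite !cats0. Qed.

Definition invw {G : graph} (l : seq (gE G)) := rev (map (@ginv G) l).

Lemma red_cancel {G : graph} (a l c : seq (gE G)) :
  reduce (a ++ invw l ++ l ++ c) = reduce (a ++ c).
Proof.
rewrite /reduce -!/(FF _ _).
elim: l c => [|x l IH] c //=.
rewrite /invw /= rev_cons -cats1 -/(invw l) -!catA /=.
have -> : x :: l ++ c = ginv (ginv x) :: l ++ c by rewrite ginvK'.
by rewrite catA FF_cancel // -catA IH.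
Qed.


Lemma path_cat {G : graph} (u w v : gV G) p q :
  is_path u w p -> is_path w v q -> is_path u v (p ++ q).
Proof.
rewrite /is_path; elim: p u => [|g p IH] u /=; first by move/eqP->.
by case/andP=> -> H1 H2 /=; apply: IH.
Qed.

Lemma path_prefix {G : graph} (u v : gV G) p q :
  is_path u v (p ++ q) -> is_path u (path_end u p) p.
Proof.
rewrite /is_path /path_end; elim: p u => [|g p IH] u /=; first by rewrite eqxx.
case/andP=> -> H /=; exact: IH H.
Qed.

Lemma path_invw {G : graph} (u v : gV G) p :
  is_path u v p -> is_path v u (invw p).
Proof.
elim: p u => [|g p IH] u /=; first by rewrite /is_path /= eq_sym.
case/andP=> /eqP Hg H.
rewrite /invw /= rev_cons -cats1.
apply: path_cat (IH _ H) _.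
by rewrite /is_path /= ginvK' Hg !eqxx.
Qed.


Definition ev {G : graph} (f : seq (gE G) -> rat) (x : fsum G) : rat :=
  \sum_(t <- x) t.1 * f t.2.
Definition rinv {G : graph} (f : seq (gE G) -> rat) := forall r, f (reduce r) = f r.
Definition shiftR {G : graph} (p : seq (gE G)) (f : seq (gE G) -> rat) :=
  fun r => f (r ++ p).

Lemma ev_ext {G : graph} (f g : seq (gE G) -> rat) x : f =1 g -> ev f x = ev g x.
Proof. by move=> H; apply: eq_bigr => t _; rewrite H. Qed.

Lemma ev_cat {G : graph} f (x y : fsum G) : ev f (x ++ y) = ev f x + ev f y.
Proof. by rewrite /ev big_cat. Qed.

Lemma ev_sub {G : graph} f (x y : fsum G) : ev f (fs_sub x y) = ev f x - ev f y.
Proof.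
rewrite /fs_sub ev_cat /ev big_map -sumrN; congr (_ + _).
by apply: eq_bigr => t _ /=; rewrite mulNr.
Qed.

Lemma ev_flatten {G : graph} {T : Type} f (F : T -> fsum G) s :
  ev f (flatten [seq F t | t <- s]) = \sum_(t <- s) ev f (F t).
Proof. by rewrite /ev big_flatten big_map. Qed.

Lemma ev_mul {G : graph} f (x y : fsum G) :
  ev f (fs_mul x y) = \sum_(t <- x) t.1 * ev (shiftR t.2 f) y.
Proof.
rewrite /ev /fs_mul big_allpairs_dep; apply: eq_bigr => t _.
rewrite big_distrr; apply: eq_bigr => t' _ /=.
by rewrite mulrA.
Qed.

Lemma ev_mul1 {G : graph} f c p (y : fsum G) :
  ev f (fs_mul [:: (c, p)] y) = c * ev (shiftR p f) y.
Proof. by rewrite ev_mul big_seq1. Qed.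

Lemma rinv_shiftR {G : graph} (f : seq (gE G) -> rat) p : rinv f -> rinv (shiftR p f).
Proof. by move=> H r; rewrite /shiftR -H red_catl H. Qed.

Lemma sum_pick {T : eqType} (Q : seq T) (a : T) (g : rat) :
  uniq Q -> a \in Q -> \sum_(q <- Q) (if a == q then g else 0) = g.
Proof.
elim: Q => [|q Q IH] //= /andP[Hq HQ]; rewrite in_cons big_cons.
case: (eqVneq a q) => [->|Hne] /= HaQ.
  rewrite big1_seq ?addr0 // => q' /andP[_ Hq'].
  by case: eqVneq => // Heq; move: Hq; rewrite Heq Hq'.
by rewrite IH // add0r.
Qed.

Lemma ev_coef {G : graph} (f : seq (gE G) -> rat) (x : fsum G) Q :
  rinv f -> uniq Q -> (forall t, t \in x -> reduce t.2 \in Q) ->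
  ev f x = \sum_(q <- Q) coef x q * f q.
Proof.
move=> Hf HQ Hx.
rewrite /coef.
under eq_bigr => q _ do rewrite big_distrl /= big_mkcond /=.
rewrite exchange_big /ev big_seq_cond [RHS]big_seq_cond.
apply: eq_bigr => t /andP[Ht _].
rewrite -(sum_pick _ _ (t.1 * f t.2) HQ (Hx t Ht)).
apply: eq_bigr => q _.
by case: eqP => // <-; rewrite Hf.
Qed.

Lemma fs_eq_ev {G : graph} (f : seq (gE G) -> rat) (x y : fsum G) :
  fs_eq x y -> rinv f -> ev f x = ev f y.
Proof.
move=> Hxy Hf.
set Q := undup [seq reduce t.2 | t <- x ++ y].
have HQ : uniq Q by apply: undup_uniq.
have Hx : forall t, t \in x -> reduce t.2 \in Q.
  by move=> t Ht; rewrite mem_undup; apply/mapP; exists t => //; rewrite mem_cat Ht.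
have Hy : forall t, t \in y -> reduce t.2 \in Q.
  by move=> t Ht; rewrite mem_undup; apply/mapP; exists t => //; rewrite mem_cat Ht orbT.
rewrite (ev_coef _ _ Q Hf HQ Hx) (ev_coef _ _ Q Hf HQ Hy).
by apply: eq_bigr => q _; rewrite Hxy.
Qed.

Lemma ev_fs_eq {G : graph} (x y : fsum G) :
  (forall f, rinv f -> ev f x = ev f y) -> fs_eq x y.
Proof.
move=> H q.
have Hf : rinv (fun r : seq (gE G) => (reduce r == q)%:R : rat).
  by move=> r; rewrite red_idem.
have := H _ Hf; rewrite /ev /coef.
have E z : \sum_(t <- z) t.1 * ((reduce t.2 == q)%:R : rat) =
           \sum_(t <- z) (if reduce t.2 == q then t.1 else 0).
  by apply: eq_bigr => t _; case: eqP => _; rewrite ?mulr1 ?mulr0.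
by rewrite !E -!big_mkcond.
Qed.


Definition conv {T : Type} (A B : seq T -> rat) (ws : seq T) : rat :=
  \sum_(i < (size ws).+1) A (drop i ws) * B (take i ws).
Definition delta {T : Type} (ws : seq T) : rat := (size ws == 0%N)%:R.

Lemma conv_ext {T : Type} (A A' B B' : seq T -> rat) ws :
  (forall i, (i <= size ws)%N -> A (drop i ws) = A' (drop i ws)) ->
  (forall i, (i <= size ws)%N -> B (take i ws) = B' (take i ws)) ->
  conv A B ws = conv A' B' ws.
Proof.
move=> HA HB; apply: eq_bigr => i _.
by rewrite HA ?HB // -ltnS ltn_ord.
Qed.

Lemma conv_delta_l {T : Type} (B : seq T -> rat) ws : conv delta B ws = B ws.
Proof.
rewrite /conv big_ord_recr /= drop_size take_size /delta eqxx mul1r.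
rewrite big1 ?add0r // => i _.
by rewrite size_drop subn_eq0 leqNgt ltn_ord mul0r.
Qed.

Lemma conv_delta_r {T : Type} (A : seq T -> rat) ws : conv A delta ws = A ws.
Proof.
rewrite /conv big_ord_recl /= drop0 take0 /delta eqxx mulr1.
rewrite big1 ?addr0 // => i _.
rewrite size_takel; last by rewrite /bump /=; have := ltn_ord i; rewrite add1n.
by rewrite mulr0.
Qed.

Lemma shift_sum (N k : nat) (F : nat -> rat) : (k <= N)%N ->
  \sum_(m < N - k) F m = \sum_(i < N) (if (k <= i)%N then F (i - k)%N else 0).
Proof.
elim: N => [|N IH] Hk.
  by rewrite sub0n !big_ord0.
rewrite big_ord_recr /=.
case: (leqP k N) => HkN.
  rewrite subSn // big_ord_recr /= IH //.
have -> : k = N.+1 by apply/eqP; rewrite eqn_leq Hk HkN.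
rewrite subnn big_ord0 addr0 big1 // => i _.
have Hi := ltn_ord i.
by rewrite ifN // -ltnNge ltnS ltnW.
Qed.

Lemma conv_assoc {T : Type} (A B C : seq T -> rat) ws :
  conv A (conv B C) ws = conv (conv A B) C ws.
Proof.
rewrite /conv; set n := size ws.
have L : forall i : 'I_n.+1,
   A (drop i ws) * (\sum_(k < (size (take i ws)).+1)
       B (drop k (take i ws)) * C (take k (take i ws)))
 = \sum_(k < n.+1) (if (k <= i)%N then
       A (drop i ws) * (B (drop k (take i ws)) * C (take k ws)) else 0).
  move=> i; have Hi : (i <= n)%N by rewrite -ltnS ltn_ord.
  rewrite size_takel // big_distrr /=.
  rewrite (big_ord_widen n.+1 (fun k : nat => A (drop i ws) * (B (drop k (take i ws)) * C (take k (take i ws))))) //.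
  rewrite big_mkcond; apply: eq_bigr => k _.
  by rewrite ltnS; case: ifP => // Hk; rewrite take_takel.
rewrite (eq_bigr _ (fun i _ => L i)).
have R : forall k : 'I_n.+1,
   (\sum_(m < (size (drop k ws)).+1)
       A (drop m (drop k ws)) * B (take m (drop k ws))) * C (take k ws)
 = \sum_(i < n.+1) (if (k <= i)%N then
       A (drop i ws) * (B (drop k (take i ws)) * C (take k ws)) else 0).
  move=> k; have Hk : (k <= n)%N by rewrite -ltnS ltn_ord.
  rewrite size_drop -subSn // big_distrl /=.
  rewrite (shift_sum n.+1 k (fun m => A (drop m (drop k ws)) * B (take m (drop k ws)) * C (take k ws))); last exact: leqW.
  apply: eq_bigr => i _; case: ifP => // Hki.
  by rewrite drop_drop subnK // take_drop subnK // mulrA.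
rewrite (eq_bigr _ (fun k _ => R k)).
by rewrite exchange_big.
Qed.


Lemma iint_rev_cons {G : graph} (e : gE G) r ws :
  iint_rev (e :: r) ws = conv (iint_edge e) (iint_rev r) ws.
Proof. by []. Qed.

Lemma iint_rev_nil {G : graph} (ws : seq (gE G -> rat)) : iint_rev [::] ws = delta ws.
Proof. by []. Qed.

Lemma iint_rev_cat {G : graph} (r1 r2 : seq (gE G)) ws :
  iint_rev (r1 ++ r2) ws = conv (iint_rev r1) (iint_rev r2) ws.
Proof.
elim: r1 ws => [|e r1 IH] ws.
  by rewrite cat0s -/(delta _) conv_delta_l.
rewrite cat_cons iint_rev_cons (conv_ext _ (iint_edge e) _ (conv (iint_rev r1) (iint_rev r2))) //.
  rewrite conv_assoc; apply: conv_ext => // i _.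
Qed.

Lemma iint_cat {G : graph} (p q : seq (gE G)) ws :
  iint (p ++ q) ws = conv (iint q) (iint p) ws.
Proof. by rewrite /iint rev_cat iint_rev_cat. Qed.

Lemma iint_nil_ws {G : graph} (p : seq (gE G)) : iint p [::] = 1.
Proof.
rewrite /iint; elim: (rev p) => [|e r IH] //.
by rewrite iint_rev_cons /conv big_ord1 /= IH /iint_edge /= big_nil invr1 !mulr1.
Qed.

Lemma iint_fs_mul {G : graph} (x y : fsum G) ws :
  iint_fs (fs_mul x y) ws = conv (iint_fs x) (iint_fs y) ws.
Proof.
rewrite /iint_fs /fs_mul big_allpairs_dep /conv.
rewrite /conv.
transitivity (\sum_(t <- x) \sum_(t' <- y) \sum_(i < (size ws).+1)
   (t.1 * iint t.2 (drop i ws)) * (t'.1 * iint t'.2 (take i ws))).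
  apply: eq_bigr => t _; apply: eq_bigr => t' _ /=.
  rewrite iint_cat /conv big_distrr; apply: eq_bigr => i _ /=.
  by rewrite mulrACA.
under eq_bigr => t _ do rewrite exchange_big.
rewrite exchange_big; apply: eq_bigr => i _.
rewrite big_distrl; apply: eq_bigr => t _ /=.
by rewrite big_distrr.
Qed.

Definition ES {T : Type} (a : rat) (c : T -> rat) (ws : seq T) : rat :=
  a ^+ size ws / (size ws)`!%:R * \prod_(w <- ws) c w.

Lemma ES0 {T : Type} (c : T -> rat) ws : ES 0 c ws = delta ws.
Proof.
rewrite /ES /delta expr0n; case: ws => [|w ws] /=.
  by rewrite big_nil fact0 invr1 !mulr1.
by rewrite !mul0r.
Qed.

Lemma binom_conv (n : nat) (a b : rat) :
  \sum_(i < n.+1) a ^+ (n - i) / (n - i)`!%:R * (b ^+ i / i`!%:R) =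
  (a + b) ^+ n / n`!%:R.
Proof.
rewrite exprDn big_distrl /=; apply: eq_bigr => i _.
have Hi : (i <= n)%N by rewrite -ltnS ltn_ord.
rewrite -(bin_fact Hi) natrM natrM.
have H1 : ((n - i)`!%:R : rat) != 0 by rewrite pnatr_eq0 -lt0n fact_gt0.
have H2 : ((i)`!%:R : rat) != 0 by rewrite pnatr_eq0 -lt0n fact_gt0.
have H3 : ('C(n, i)%:R : rat) != 0 by rewrite pnatr_eq0 -lt0n bin_gt0.
rewrite -mulr_natr; field.
by rewrite H1 H2 H3.
Qed.

Lemma conv_ES {T : Type} (a b : rat) (c : T -> rat) ws :
  conv (ES a c) (ES b c) ws = ES (a + b) c ws.
Proof.
rewrite /conv /ES -binom_conv big_distrl /=; apply: eq_bigr => i _.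
have Hi : (i <= size ws)%N by rewrite -ltnS ltn_ord.
rewrite size_drop size_takel //.
have -> : \prod_(w <- ws) c w = \prod_(w <- take i ws) c w * \prod_(w <- drop i ws) c w
  by rewrite -big_cat cat_take_drop.
by rewrite mulrACA [X in _ * X]mulrC.
Qed.


Lemma all_take' {T : Type} (P : pred T) s i : all P s -> all P (take i s).
Proof. by rewrite -{1}(cat_take_drop i s) all_cat => /andP[]. Qed.
Lemma all_drop' {T : Type} (P : pred T) s i : all P s -> all P (drop i s).
Proof. by rewrite -{1}(cat_take_drop i s) all_cat => /andP[]. Qed.

Lemma prod_split {T : Type} (a : rat) (c : T -> rat) ws :
  \prod_(w <- ws) (a * c w) = a ^+ size ws * \prod_(w <- ws) c w.
Proof.
elim: ws => [|w ws IH]; first by rewrite !big_nil mulr1.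
by rewrite !big_cons IH /= exprS; ring.
Qed.

Lemma prod_all_eq {T : Type} (F F' : T -> rat) ws :
  all (fun w => F w == F' w) ws -> \prod_(w <- ws) F w = \prod_(w <- ws) F' w.
Proof.
elim: ws => [|w ws IH] //=; first by rewrite !big_nil.
by case/andP => /eqP H1 H2; rewrite !big_cons H1 IH.
Qed.

Lemma iint_edge_const {G : graph} (e : gE G) ws s (c : (gE G -> rat) -> rat) :
  all (fun w => glen e * w e == s * c w) ws -> iint_edge e ws = ES s c ws.
Proof.
move=> H; rewrite /iint_edge /ES.
rewrite (prod_all_eq _ (fun w => s * c w) _ H).
rewrite prod_split; field; by rewrite pnatr_eq0 -lt0n fact_gt0.
Qed.

Lemma iint_rev_const {G : graph} (r : seq (gE G)) ws (s : gE G -> rat) c :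
  all (fun w => all (fun e => glen e * w e == s e * c w) r) ws ->
  iint_rev r ws = ES (\sum_(e <- r) s e) c ws.
Proof.
elim: r ws => [|e r IH] ws H; first by rewrite big_nil ES0.
rewrite iint_rev_cons big_cons -conv_ES.
apply: conv_ext => i _.
  apply: iint_edge_const; apply: all_drop'.
  by apply: sub_all H => w /= /andP[].
apply: IH; apply: all_take'.
by apply: sub_all H => w /= /andP[].
Qed.

Lemma iint_const {G : graph} (p : seq (gE G)) ws (s : gE G -> rat) c :
  all (fun w => all (fun e => glen e * w e == s e * c w) p) ws ->
  iint p ws = ES (\sum_(e <- p) s e) c ws.
Proof.
move=> H; rewrite /iint -big_rev; apply: iint_rev_const.
by apply: sub_all H => w /=; rewrite all_rev.
Qed.

Lemma cycle_inv {G : graph} (w : gE G -> rat) e : is_cycle w -> w (ginv e) = - w e.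
Proof. by case/andP => /forallP H _; apply/eqP; apply: H. Qed.

Lemma iint_pair {G : graph} (x : gE G) ws :
  all (@is_cycle G) ws -> iint [:: x; ginv x] ws = delta ws.
Proof.
move=> H.
rewrite (iint_const _ _ (fun y => if y == x then glen x else - glen x) (fun w => w x)).
  by rewrite big_cons big_seq1 eqxx (negbTE (ginv_neq x)) subrr ES0.
apply: sub_all H => w Hw /=.
rewrite eqxx (negbTE (ginv_neq x)) glen_inv (cycle_inv w x Hw) !andbT.
by rewrite eqxx mulrN mulNr eqxx.
Qed.

Lemma iint_cancel {G : graph} (a b : seq (gE G)) x ws :
  all (@is_cycle G) ws ->
  iint (a ++ x :: ginv x :: b) ws = iint (a ++ b) ws.
Proof.
move=> H.
rewrite -[x :: ginv x :: b]/([:: x; ginv x] ++ b) !iint_cat.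
apply: conv_ext => // i _.
rewrite iint_cat -[RHS]conv_delta_r.
apply: conv_ext => // k _.
by rewrite iint_pair //; apply: all_take'; apply: all_drop'.
Qed.

Lemma iint_FF {G : graph} (st q : seq (gE G)) ws :
  all (@is_cycle G) ws -> iint (rev (FF st q)) ws = iint (rev st ++ q) ws.
Proof.
move=> H; elim: q st => [|e q IH] st; first by rewrite cats0.
rewrite /FF /= -/(FF _ _) IH.
case: st => [|f st] //=.
case: ifP => Hf.
  rewrite rev_cons cat_rcons (eqP Hf).
  have -> : e :: q = ginv (ginv e) :: q by rewrite ginvK'.
  by rewrite iint_cancel.
by rewrite [rev (e :: _)]rev_cons cat_rcons.
Qed.

Lemma iint_red {G : graph} (p : seq (gE G)) ws :
  all (@is_cycle G) ws -> iint (reduce p) ws = iint p ws.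
Proof. by move=> H; rewrite /reduce -/(FF _ _) iint_FF. Qed.

Lemma rinv_iint {G : graph} ws : all (@is_cycle G) ws -> rinv (fun r => iint r ws).
Proof. by move=> H r; apply: iint_red. Qed.


Lemma iint_fs_sub {G : graph} (x y : fsum G) ws :
  iint_fs (fs_sub x y) ws = iint_fs x ws - iint_fs y ws.
Proof. exact: (ev_sub (fun r => iint r ws)). Qed.

Lemma iint_fs1 {G : graph} c (p : seq (gE G)) ws : iint_fs [:: (c, p)] ws = c * iint p ws.
Proof. by rewrite /iint_fs big_seq1. Qed.

Lemma iint_aug {G : graph} (gs : seq (seq (gE G))) ws :
  (size ws < size gs)%N -> iint_fs (aug_prod gs) ws = 0.
Proof.
elim: gs ws => [|g gs IH] ws //= Hs.
rewrite iint_fs_mul /conv big1 // => i _.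
case: (ltnP (size (take i ws)) (size gs)) => Hlt.
  by rewrite IH // mulr0.
have Hi : (size ws <= i)%N.
  move: Hlt; rewrite size_take; case: ifP => // Hi Hle.
  by move: Hs; rewrite ltnS => Hs'; have := leq_trans Hs' Hle; rewrite leqNgt Hi.
  by rewrite leqNgt Hi.
rewrite drop_oversize // /iint_fs big_cons big_seq1 /= !iint_nil_ws.
by rewrite mulr1 subrr mul0r.
Qed.

Lemma inJ_vanish {G : graph} (u v : gV G) n x ws :
  in_J u v n x -> all (@is_cycle G) ws -> (size ws < n)%N -> iint_fs x ws = 0.
Proof.
case=> ts [Hts Heq] Hc Hs.
rewrite -[iint_fs x ws]/(ev (fun r => iint r ws) x).
rewrite (fs_eq_ev _ _ _ Heq (rinv_iint _ Hc)) ev_flatten big1_seq // => t /andP[_ Ht].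
move/allP: Hts => /(_ t Ht) /and3P[_ /eqP Hn _].
rewrite -[ev _ _]/(iint_fs _ ws) iint_fs_mul /conv big1 // => i _.
rewrite iint_aug ?mulr0 // Hn.
by rewrite size_take; case: ifP => // /ltn_trans; apply.
Qed.

Lemma level_indep {G : graph} (u v : gV G) X ws m :
  in_completion u v X -> all (@is_cycle G) ws -> (size ws < m)%N ->
  iint_fs (X m) ws = iint_fs (X (size ws).+1) ws.
Proof.
case=> _ HX Hc; elim: m => [|m IH] //.
rewrite ltnS leq_eqVlt => /orP[/eqP <-|Hlt] //.
rewrite -IH // -[iint_fs (X m.+1) ws](subrK (iint_fs (X m) ws)) -iint_fs_sub.
by rewrite (inJ_vanish _ _ _ _ _ (HX m) Hc Hlt) add0r.
Qed.


Lemma cycle_vertex {G : graph} (w : gE G -> rat) x :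
  is_cycle w -> \sum_(f in [set f | gsrc f == x]) w f = 0.
Proof.
case/andP => _ /forallP /(_ x) /eqP H; rewrite -[RHS]H.
by apply: eq_bigl => f; rewrite inE.
Qed.

Lemma chain_step {G : graph} u (es : seq (gE G)) kind w d i :
  subdivided_edge u es kind -> is_cycle w -> (i.+1 < size es)%N ->
  w (nth d es i.+1) = w (nth d es i).
Proof.
case=> _ Hu H3 _ Hw Hi.
have [Hset _] := H3 d i Hi.
have := cycle_vertex w (tgt (nth d es i)) Hw; rewrite Hset.
have Hne : ginv (nth d es i) \notin [set nth d es i.+1].
  rewrite inE; apply/negP => /eqP Heq.
  move: Hu; rewrite cat_uniq => /and3P[_ Hn _]; move/negP: Hn; apply; apply/hasP.
  exists (ginv (nth d es i)); last by rewrite Heq mem_nth.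
  by apply: map_f; apply: mem_nth; apply: ltn_trans Hi.
rewrite big_setU1 //= big_set1 (cycle_inv _ _ Hw) => /eqP.
by rewrite addrC subr_eq0 => /eqP.
Qed.

Lemma chain_const {G : graph} u (es : seq (gE G)) kind w d i :
  subdivided_edge u es kind -> is_cycle w -> (i < size es)%N ->
  w (nth d es i) = w (nth d es 0).
Proof.
move=> Hs Hw; elim: i => [|i IH] Hi //.
by rewrite (chain_step _ _ _ _ _ _ Hs Hw Hi) IH // ltnW.
Qed.

Lemma chain_estar {G : graph} u (es : seq (gE G)) kind w :
  subdivided_edge u es kind -> is_cycle w ->
  all (fun e => w e == estar_pair es kind w) es.
Proof.
move=> Hs Hw.
case: es Hs => [|e1 es'] Hs //.
have Hall : forall i, (i < size (e1 :: es'))%N -> w (nth e1 (e1 :: es') i) = w e1.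
  by move=> i Hi; rewrite (chain_const _ _ _ _ _ _ Hs Hw Hi).
have Hw1 : w e1 = estar_pair (e1 :: es') kind w.
  case: kind Hs => [h|] Hs //=.
  case: Hs => _ _ _ [Hh H4].
  have [Hset _] := H4 e1 (erefl true).
  have := cycle_vertex w (path_end u (e1 :: es')) Hw.
  rewrite Hset big_set1 (cycle_inv _ _ Hw) -(nth_last e1) Hall //.
    by move/eqP; rewrite oppr_eq0 => /eqP.
apply/allP => e He; rewrite -Hw1.
by rewrite -(nth_index e1 He) Hall // index_mem.
Qed.


Definition conjw {G : graph} (l g : seq (gE G)) := l ++ g ++ invw l.

Lemma ev_conj {G : graph} (F : seq (gE G) -> rat) l gs :
  rinv F ->
  ev (fun r => F (l ++ r)) (aug_prod gs) =
  ev (fun r => F (r ++ l)) (aug_prod (map (conjw l) gs)).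
Proof.
elim: gs F => [|g gs IH] F HF.
  by rewrite /= /ev !big_seq1 /= cats0.
rewrite /= !ev_mul !big_cons !big_nil /= !addr0.
rewrite (ev_ext (shiftR g (fun r => F (l ++ r))) (fun r => (shiftR g F) (l ++ r))); last first.
  by move=> r; rewrite /shiftR catA.
rewrite IH; last exact: rinv_shiftR.
rewrite (ev_ext (shiftR [::] (fun r => F (l ++ r))) (fun r => F (l ++ r))); last first.
  by move=> r; rewrite /shiftR cats0.
rewrite IH //.
congr (1 * _ + -1 * _).
  apply: ev_ext => r; rewrite /shiftR /conjw -HF -[RHS]HF.
  have E := red_cancel (r ++ l ++ g) l [::]; rewrite !cats0 -!catA in E.
  by rewrite -!catA E.
by apply: ev_ext => r; rewrite /shiftR cats0.
Qed.

Lemma ev_mul3 {G : graph} f c p (y z : fsum G) :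
  ev f (fs_mul (fs_mul [:: (c, p)] y) z) = c * ev (fun r => ev (shiftR (r ++ p) f) z) y.
Proof.
rewrite ev_mul /fs_mul big_allpairs_dep big_seq1 /ev big_distrr.
by apply: eq_bigr => t _ /=; rewrite mulrA.
Qed.

Lemma ev_swap {G : graph} (g : seq (gE G) -> seq (gE G) -> rat) (y z : fsum G) :
  ev (fun r => ev (g r) z) y = \sum_(d <- z) d.1 * ev (fun r => g r d.2) y.
Proof.
rewrite /ev; under eq_bigr => t _ do rewrite big_distrr.
rewrite exchange_big; apply: eq_bigr => d _ /=.
rewrite big_distrr; apply: eq_bigr => t _ /=.
by rewrite mulrCA.
Qed.


Lemma ev_subf {G : graph} (g1 g2 : seq (gE G) -> rat) x :
  ev (fun r => g1 r - g2 r) x = ev g1 x - ev g2 x.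
Proof.
rewrite /ev -sumrB; apply: eq_bigr => t _; by rewrite mulrBr.
Qed.

Lemma evE {G : graph} (F : seq (gE G) -> rat) x : ev F x = \sum_(t <- x) t.1 * F t.2.
Proof. by []. Qed.

Lemma sum_W {G : graph} (F : rat * seq (gE G) -> rat) c p (y : fsum G) :
  \sum_(s0 <- fs_mul [:: (c, p)] y) F s0 = \sum_(g <- y) F (c * g.1, g.2 ++ p).
Proof. by rewrite /fs_mul big_allpairs_dep big_seq1. Qed.

Theorem corollary4p12 (G : graph) (u : gV G) (es : seq (gE G))
    (kind : option (gH G)) (j : nat) (b : gV G) (Gc X : nat -> fsum G) :
  subdivided_edge u es kind ->
  (j <= size es)%N ->
  canonical_path b u Gc ->
  in_completion b b X ->
  ser_eq (alpha X) (ser_exp (- \sum_(e <- take j es) glen e) (estar_pair es kind)) ->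
  canonical_path b (path_end u (take j es))
    (fun n => fs_mul (fs_mul [:: (1, take j es)] (Gc n)) (X n)).
Proof.
move=> Hsub Hj [HGc HalphaG] HX HalphaX.
set e := take j es; set v := path_end u e.
have He : is_path u v e.
  case: Hsub => Hp _ _ _; apply: (path_prefix u (path_end u es) e (drop j es)).
  by rewrite cat_take_drop.
case: (HGc) => HGp HGJ; case: (HX) => HXp HXJ.
split; last first.
  move=> ws Hc; rewrite /alpha /ser_one.
  set s := \sum_(e0 <- e) glen e0; set pe := estar_pair es kind.
  rewrite iint_fs_mul.
  transitivity (conv (ES s pe) (ES (-s) pe) ws); last by rewrite conv_ES subrr ES0.
  apply: conv_ext => i Hi.
    set ws' := drop i ws.
    have Hc' : all (@is_cycle G) ws' by apply: all_drop'.
    have Hie : iint e ws' = ES s pe ws'.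
      apply: iint_const; apply: sub_all Hc' => w Hw /=.
      have := all_take' _ _ j (chain_estar u es kind w Hsub Hw).
      by apply: sub_all => e0 /= /eqP ->.
    rewrite -Hie iint_fs_mul -[iint e ws']mul1r -iint_fs1 -[RHS]conv_delta_r.
    apply: conv_ext => // k Hk.
    have Hck : all (@is_cycle G) (take k ws') by apply: all_take'.
    rewrite (level_indep _ _ _ _ _ HGc Hck).
      by rewrite -[iint_fs _ _]/(alpha Gc _) HalphaG.
    rewrite ltnS size_take; case: ifP => _; last by rewrite size_drop leq_subr.
    by apply: leq_trans Hk _; rewrite size_drop leq_subr.
  have Hct : all (@is_cycle G) (take i ws) by apply: all_take'.
  rewrite (level_indep _ _ _ _ _ HX Hct).
    by rewrite -[iint_fs _ _]/(alpha X _) HalphaX.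
  by rewrite ltnS size_take; case: ifP => // /ltnW.
have HWp : forall n, all (fun s0 => is_path b v s0.2) (fs_mul [:: (1, e)] (Gc n)).
  move=> n; apply/allP => z /allpairsP [[s1 g] [Hs1 Hg ->]] /=.
  move: Hs1; rewrite /= inE => /eqP -> /=.
  exact: path_cat _ _ _ _ _ (allP (HGp n) g Hg) He.
split.
  move=> n; apply/allP => z /allpairsP [[t1 t2] [Ht1 Ht2 ->]] /=.
  exact: path_cat _ _ _ _ _ (allP (HXp n) t2 Ht2) (allP (HWp n) t1 Ht1).
move=> n.
have [tsG [HtsG HeqG]] := HGJ n; have [tsX [HtsX HeqX]] := HXJ n.
exists ([seq ((t.1.1 * d.1, d.2 ++ t.1.2 ++ e), map (conjw d.2) t.2) | t <- tsG, d <- X n.+1]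
     ++ [seq ((s0.1 * t.1.1, t.1.2 ++ s0.2), t.2) | s0 <- fs_mul [:: (1, e)] (Gc n), t <- tsX]).
split.
  rewrite all_cat; apply/andP; split; apply/allP => z /allpairsP [[t d] [Ht Hd ->]] /=.
    have /and3P [Hp Hs Ha] := allP HtsG t Ht.
    have Hd' := allP (HXp n.+1) d Hd.
    rewrite size_map Hs all_map /=; apply/andP; split.
      exact: path_cat _ _ _ _ _ Hd' (path_cat _ _ _ _ _ Hp He).
    apply: sub_all Ha => g Hg /=; rewrite /conjw.
    exact: path_cat _ _ _ _ _ Hd' (path_cat _ _ _ _ _ Hg (path_invw _ _ _ Hd')).
  have /and3P [Hp Hs Ha] := allP HtsX d Hd.
  apply/and3P; split => //.
  exact: path_cat _ _ _ _ _ Hp (allP (HWp n) t Ht).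
apply: ev_fs_eq => f Hf.
rewrite ev_sub ev_flatten big_cat /= !ev_mul3 !mul1r.
set H' := fun r => ev (shiftR (r ++ e) f) (X n.+1).
have split3 : forall a b c : rat, a - c = (a - b) + (b - c) by move=> *; ring.
rewrite (split3 _ (ev H' (Gc n))); congr (_ + _).
  have HinvH : rinv H'.
    move=> r; rewrite /H' /ev; apply: eq_bigr => d _; rewrite /shiftR.
    by congr (_ * _); rewrite -[LHS]Hf -[RHS]Hf red_mid.
  rewrite -ev_sub (fs_eq_ev _ _ _ HeqG HinvH) ev_flatten big_allpairs_dep.
  apply: eq_bigr => [[[c p] gs]] _ /=.
  rewrite ev_mul1.
  rewrite (_ : ev (shiftR p H') (aug_prod gs) = ev (fun r => ev ((fun r d2 => f (d2 ++ (r ++ p) ++ e)) r) (X n.+1)) (aug_prod gs)) //.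
  rewrite ev_swap big_distrr; apply: eq_bigr => d _ /=.
  rewrite ev_mul1.
  rewrite (ev_ext _ (fun r => (shiftR (p ++ e) f) (d.2 ++ r))); last first.
    by move=> r; rewrite /shiftR -!catA.
  rewrite ev_conj; last exact: rinv_shiftR.
  rewrite mulrA; congr (_ * _); apply: ev_ext => r; by rewrite /shiftR -!catA.
rewrite -ev_subf.
rewrite (ev_ext _ (fun r => \sum_(t <- tsX) ev (shiftR (r ++ e) f) (fs_mul [:: t.1] (aug_prod t.2)))); last first.
  move=> r; rewrite /H' -ev_sub (fs_eq_ev _ _ _ HeqX (rinv_shiftR _ _ Hf)) ev_flatten //.
rewrite big_allpairs_dep sum_W [LHS]evE.
apply: eq_bigr => g _; rewrite big_distrr; apply: eq_bigr => [[[c p] gs]] _ /=.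
rewrite !ev_mul1 mulrA mul1r; congr (_ * _); apply: ev_ext => r; by rewrite /shiftR -!catA.
Qed.
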